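(* For any torsionfree compact Hausdorff linear-topological $o$-module $M$, the locally convex $K$-vector space $M_K$ is complete.
   Context: $K$ is a finite extension of $\mathbb{Q}_p$ with ring of integers $o$. A topological $o$-module is linear-topological if $0$ has a fundamental system of open neighbourhoods consisting of $o$-submodules. For a torsionfree $o$-module $M$, $M_K := M\otimes_o K$ contains $M$, and $M_K$ is equipped with the finest locally convex topology such that the inclusion $M\subseteq M_K$ is continuous (equivalently, an $o$-submodule $L\subseteq M_K$ is open iff $\alpha L\cap M$ is open in $M$ for every $0\neq\alpha\in o$). *)

(* Defs.v *)
From HB Require Import structures.
From mathcomp Require Import all_boot all_order all_algebra.
From mathcomp Require Import classical_sets reals.

Set Implicit Arguments.
Unset Strict Implicit.
Unset Printing Implicit Defensive.

Import Order.TTheory GRing.Theory Num.Theory.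
Local Open Scope ring_scope.
Local Open Scope classical_set_scope.

Definition nonarch_abs (R : realType) (K : fieldType) (abs : K -> R) : Prop :=
  [/\ forall x, 0 <= abs x,
      forall x, abs x = 0 <-> x = 0,
      forall x y, abs (x * y) = abs x * abs y &
      forall x y, abs (x + y) <= Num.max (abs x) (abs y)].

Definition abs_cauchy_seq (R : realType) (K : fieldType) (abs : K -> R)
  (u : nat -> K) : Prop :=
  forall e : R, 0 < e -> exists N : nat,
    forall n m, (N <= n)%N -> (N <= m)%N -> abs (u n - u m) < e.

Definition abs_cvg (R : realType) (K : fieldType) (abs : K -> R)
  (u : nat -> K) (l : K) : Prop :=
  forall e : R, 0 < e -> exists N : nat,
    forall n, (N <= n)%N -> abs (u n - l) < e.

Definition abs_complete (R : realType) (K : fieldType) (abs : K -> R) : Prop :=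
  forall u : nat -> K, abs_cauchy_seq abs u -> exists l, abs_cvg abs u l.

(* the ring of integers o = closed unit ball is (sequentially) compact,
   i.e. K is locally compact *)
Definition integers_compact (R : realType) (K : fieldType) (abs : K -> R) : Prop :=
  forall u : nat -> K, (forall n, abs (u n) <= 1) ->
    exists (phi : nat -> nat) (l : K),
      (forall n, (phi n < phi n.+1)%N) /\ abs_cvg abs (u \o phi) l.

Definition padic_field (R : realType) (K : fieldType) (abs : K -> R) (p : nat)
  : Prop :=
  [/\ nonarch_abs abs,
      forall n : nat, (n.+1)%:R != 0 :> K,
      abs p%:R < 1,
      abs_complete abs &
      integers_compact abs].

Definition o_submodule (R : realType) (K : fieldType) (abs : K -> R)
  (V : lmodType K) (L : set V) : Prop :=
  [/\ L 0,
      forall x y, L x -> L y -> L (x + y) &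
      forall (a : K) x, abs a <= 1 -> L x -> L (a *: x)].

(* V = M (x)_o K: every vector is in alpha^-1 M for some 0 <> alpha in o *)
Definition generates_over_K (R : realType) (K : fieldType) (abs : K -> R)
  (V : lmodType K) (M : set V) : Prop :=
  forall v : V, exists a : K, [/\ a != 0, abs a <= 1 & M (a *: v)].

Definition topology_on (T : Type) (M : set T) (tau : set (set T)) : Prop :=
  [/\ forall U, tau U -> U `<=` M,
      tau M,
      forall F : set (set T), F `<=` tau -> tau (\bigcup_(U in F) U) &
      forall U W, tau U -> tau W -> tau (U `&` W)].

Definition hausdorff_on (T : Type) (M : set T) (tau : set (set T)) : Prop :=
  forall x y, M x -> M y -> x <> y ->
    exists U W, [/\ tau U, tau W, U x, W y & U `&` W = set0].

Definition compact_on (T : Type) (M : set T) (tau : set (set T)) : Prop :=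
  forall F : set (set T), F `<=` tau -> M `<=` \bigcup_(U in F) U ->
    exists (n : nat) (G : nat -> set T),
      (forall i, (i < n)%N -> F (G i)) /\
      (forall x, M x -> exists i, (i < n)%N /\ G i x).

Definition topological_o_module (R : realType) (K : fieldType) (abs : K -> R)
  (V : lmodType K) (M : set V) (tau : set (set V)) : Prop :=
  (forall x y, M x -> M y -> forall W, tau W -> W (x + y) ->
     exists U U', [/\ tau U, tau U', U x, U' y &
                     forall u u', U u -> U' u' -> W (u + u')]) /\
  (forall (a : K) x, abs a <= 1 -> M x -> forall W, tau W -> W (a *: x) ->
     exists (d : R) U, [/\ 0 < d, tau U, U x &
        forall (b : K) y, abs b <= 1 -> abs (b - a) < d -> U y -> W (b *: y)]).

Definition linear_topological (R : realType) (K : fieldType) (abs : K -> R)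
  (V : lmodType K) (M : set V) (tau : set (set V)) : Prop :=
  forall W, tau W -> W 0 ->
    exists L, [/\ o_submodule abs L, tau L & L `<=` W].

Definition MK_open (R : realType) (K : fieldType) (abs : K -> R)
  (V : lmodType K) (M : set V) (tau : set (set V)) (U : set V) : Prop :=
  forall v, U v -> exists L : set V,
    [/\ o_submodule abs L,
        forall a : K, a != 0 -> abs a <= 1 -> tau (((fun x => a *: x) @` L) `&` M) &
        forall w, L w -> U (v + w)].

Definition proper_filter_on (T : Type) (F : set (set T)) : Prop :=
  [/\ F setT, ~ F set0,
      forall A B, F A -> A `<=` B -> F B &
      forall A B, F A -> F B -> F (A `&` B)].

Definition MK_cauchy (R : realType) (K : fieldType) (abs : K -> R)
  (V : lmodType K) (M : set V) (tau : set (set V)) (F : set (set V)) : Prop :=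
  forall U, MK_open abs M tau U -> U 0 ->
    exists A, F A /\ forall x y, A x -> A y -> U (x - y).

Definition MK_converges (R : realType) (K : fieldType) (abs : K -> R)
  (V : lmodType K) (M : set V) (tau : set (set V)) (F : set (set V)) : Prop :=
  exists v : V, forall U, MK_open abs M tau U -> U v -> F U.

Definition MK_complete (R : realType) (K : fieldType) (abs : K -> R)
  (V : lmodType K) (M : set V) (tau : set (set V)) : Prop :=
  forall F, proper_filter_on F -> MK_cauchy abs M tau F ->
    MK_converges abs M tau F.

(* Main.v *)
Require Import Defs.
From HB Require Import structures.
From mathcomp Require Import all_boot all_order all_algebra.
From mathcomp Require Import classical_sets reals.
From mathcomp Require Import boolp lra.
Set Implicit Arguments.
Unset Strict Implicit.
Unset Printing Implicit Defensive.
Import Order.TTheory GRing.Theory Num.Theory.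
Local Open Scope ring_scope.

Lemma bern (R : realType) (s : R) (k : nat) : 1 <= s -> 1 + k%:R * (s - 1) <= s ^+ k.
Proof.
move=> s1; elim: k => [|k IH]; first by rewrite mul0r addr0 expr0.
rewrite exprS -natr1 mulrDl mul1r.
have h0 : 0 <= s - 1 by rewrite subr_ge0.
have : s * (1 + k%:R * (s - 1)) <= s * s ^+ k by rewrite ler_wpM2l // (le_trans _ s1).
have hk : 0 <= k%:R * (s - 1) :> R by rewrite mulr_ge0.
nra.
Qed.

Lemma small_pow (R : realType) (q r : R) : 0 <= q -> q < 1 -> 0 < r -> exists k : nat, q ^+ k <= r.
Proof.
move=> q0 q1 r0.
have [->|qn0] := eqVneq q 0; first by exists 1%N; rewrite expr1 ltW.
have qp : 0 < q by rewrite lt0r qn0.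
set s := q^-1.
have s1 : 1 < s by rewrite /s invf_gt1.
pose k := Num.bound (r^-1 / (s - 1)).
have hb := @archi_boundP R (r^-1 / (s - 1)).
have h1 : 0 < s - 1 by rewrite subr_gt0.
have hpos : 0 <= r^-1 / (s - 1) by rewrite ltW // divr_gt0 // invr_gt0.
have {}hb := hb hpos.
exists k.
have hk : r^-1 < k%:R * (s - 1) by rewrite -ltr_pdivrMr.
have hs : r^-1 < s ^+ k by apply: (@lt_le_trans _ _ (1 + k%:R * (s - 1))); [lra| exact: bern (ltW s1)].
rewrite -[q]invrK exprVn -/s.
rewrite -[r]invrK lef_pV2 ?posrE ?exprn_gt0 ?invr_gt0 //; first by rewrite ltW.

Qed.

Local Open Scope classical_set_scope.


Lemma abs1_lem (R : realType) (K : fieldType) (abs : K -> R) :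
  nonarch_abs abs -> abs 1 = 1.
Proof.
move=> [a0 ae aM aD].
have a10 : abs 1 != 0 by apply/eqP => /ae /eqP; rewrite oner_eq0.
have h := aM 1 1; rewrite mul1r in h.
by apply: (mulfI a10); rewrite mulr1 -h.
Qed.

Lemma absN1_lem (R : realType) (K : fieldType) (abs : K -> R) :
  nonarch_abs abs -> abs (-1) = 1.
Proof.
move=> ha; have a1 := abs1_lem ha; case: ha => [a0 ae aM aD].
have h := aM (-1) (-1); rewrite mulrNN mul1r a1 in h.
have := a0 (-1); nra.
Qed.

Lemma absX_lem (R : realType) (K : fieldType) (abs : K -> R) :
  nonarch_abs abs -> forall a n, abs (a ^+ n) = abs a ^+ n.
Proof.
move=> ha a n; have a1 := abs1_lem ha; case: ha => [a0 ae aM aD].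
by elim: n => [|n IH]; rewrite ?expr0 // !exprS aM IH.
Qed.

Lemma absV_lem (R : realType) (K : fieldType) (abs : K -> R) :
  nonarch_abs abs -> forall a, a != 0 -> abs (a^-1) = (abs a)^-1.
Proof.
move=> ha a an0; have a1 := abs1_lem ha; case: ha => [a0 ae aM aD].
have h : abs a * abs a^-1 = 1 by rewrite -aM mulfV.
have aa : abs a != 0 by apply/eqP => /ae /eqP; rewrite (negbTE an0).
by rewrite -[LHS](mulKf aa) h mulr1.
Qed.

Lemma osubN (R : realType) (K : fieldType) (abs : K -> R) (V : lmodType K) (S : set V) :
  nonarch_abs abs -> o_submodule abs S -> forall x, S x -> S (- x).
Proof.
move=> ha [S0 SD SZ] x Sx; rewrite -scaleN1r; apply: SZ => //.
by rewrite (absN1_lem ha).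
Qed.

Lemma osubB (R : realType) (K : fieldType) (abs : K -> R) (V : lmodType K) (S : set V) :
  nonarch_abs abs -> o_submodule abs S -> forall x y, S x -> S y -> S (x - y).
Proof.
move=> ha hS x y Sx Sy; case: (hS) => [S0 SD SZ]; apply: SD => //.
exact: osubN hS _ Sy.
Qed.

Lemma osub_sum (R : realType) (K : fieldType) (abs : K -> R) (V : lmodType K) (S : set V)
  (I : Type) (r : seq I) (P : pred I) (F : I -> V) :
  o_submodule abs S -> (forall i, P i -> S (F i)) -> S (\sum_(i <- r | P i) F i).
Proof.
move=> [S0 SD SZ] hF; exact: (big_ind S).
Qed.

Lemma osubI (R : realType) (K : fieldType) (abs : K -> R) (V : lmodType K) (S1 S2 : set V) :
  o_submodule abs S1 -> o_submodule abs S2 -> o_submodule abs (S1 `&` S2).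
Proof.
move=> [S0 SD SZ] [T0 TD TZ]; split => //.
- by move=> x y [? ?] [? ?]; split; [apply: SD|apply: TD].
- by move=> a x ha [? ?]; split; [apply: SZ|apply: TZ].
Qed.

Lemma osub_img (R : realType) (K : fieldType) (abs : K -> R) (V : lmodType K) (S : set V) (a : K) :
  o_submodule abs S -> o_submodule abs ((fun x => a *: x) @` S).
Proof.
move=> [S0 SD SZ]; split.
- by exists 0 => //; rewrite scaler0.
- by move=> _ _ [x Sx <-] [y Sy <-]; exists (x + y); [apply: SD|rewrite scalerDr].
- move=> b _ hb [x Sx <-]; exists (b *: x); first exact: SZ.
  by rewrite !scalerA mulrC.
Qed.

Lemma open_of_local (T : Type) (M : set T) (tau : set (set T)) (S : set T) :
  topology_on M tau ->
  (forall y, S y -> exists O, [/\ tau O, O y & O `<=` S]) -> tau S.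
Proof.
move=> [tM tMM tU tI] hS.
have -> : S = \bigcup_(O in [set O | tau O /\ O `<=` S]) O.
  apply/seteqP; split.
  - by move=> y /hS [O [tO Oy OS]]; exists O.
  - by move=> y [O [_ OS] Oy]; exact: OS.
by apply: tU => O [].
Qed.

Lemma open_submod (R : realType) (K : fieldType) (abs : K -> R) (V : lmodType K)
  (M : set V) (tau : set (set V)) (S N : set V) :
  nonarch_abs abs -> o_submodule abs M -> topology_on M tau ->
  topological_o_module abs M tau ->
  o_submodule abs S -> S `<=` M -> tau N -> N 0 -> N `<=` S -> tau S.
Proof.
move=> ha hM htop [cA cZ] hS SM tN N0 NS.
apply: (open_of_local htop) => y Sy.
have My := SM _ Sy.
have Mny := osubN ha hM My.
have := cA y (- y) My Mny N tN; rewrite subrr => /(_ N0) [U [U' [tU tU' Uy U'y hUU]]].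
exists U; split => // u Uu.
have h := hUU u (- y) Uu U'y.
have : S (u - y + y) by case: hS => [S0 SD SZ]; apply: SD => //; exact: NS.
by rewrite subrK.
Qed.

Definition olat (R : realType) (K : fieldType) (abs : K -> R) (V : lmodType K)
  (M : set V) (tau : set (set V)) (L : set V) : Prop :=
  o_submodule abs L /\
  forall a : K, a != 0 -> abs a <= 1 -> tau (((fun x => a *: x) @` L) `&` M).

Lemma olat_open (R : realType) (K : fieldType) (abs : K -> R) (V : lmodType K)
  (M : set V) (tau : set (set V)) (L : set V) :
  olat abs M tau L -> MK_open abs M tau L.
Proof.
move=> [hL hLt] v Lv; exists L; split => // w Lw.
by case: hL => [L0 LD LZ]; apply: LD.
Qed.

Lemma open_olat (R : realType) (K : fieldType) (abs : K -> R) (V : lmodType K)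
  (M : set V) (tau : set (set V)) (U : set V) :
  MK_open abs M tau U -> U 0 -> exists L, olat abs M tau L /\ L `<=` U.
Proof.
move=> hU U0; have [L [hL hLt hLU]] := hU 0 U0.
by exists L; split => // w Lw; rewrite -[w]add0r; apply: hLU.
Qed.

Lemma olatI (R : realType) (K : fieldType) (abs : K -> R) (V : lmodType K)
  (M : set V) (tau : set (set V)) (L1 L2 : set V) :
  topology_on M tau ->
  olat abs M tau L1 -> olat abs M tau L2 -> olat abs M tau (L1 `&` L2).
Proof.
move=> [tM tMM tU tI] [h1 t1] [h2 t2]; split; first exact: osubI.
move=> a a0 a1.
have -> : (fun x => a *: x) @` (L1 `&` L2) `&` M =
   ((fun x => a *: x) @` L1 `&` M) `&` ((fun x => a *: x) @` L2 `&` M).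
  apply/seteqP; split.
  - by move=> _ [[x [x1 x2] <-] Mx]; split; split => //; exists x.
  - move=> _ [[[x x1 <-] Mx] [[y y2 eyx] _]]; split => //.
    exists x => //; split => //.
    have : a *: (y - x) = 0 by rewrite scalerBr eyx subrr.
    move/eqP; rewrite scaler_eq0 (negbTE a0) /= subr_eq0 => /eqP <-.
    done.
by apply: tI; [apply: t1|apply: t2].
Qed.

Lemma olatT (R : realType) (K : fieldType) (abs : K -> R) (V : lmodType K)
  (M : set V) (tau : set (set V)) :
  topology_on M tau -> olat abs M tau setT.
Proof.
move=> [tM tMM tU tI]; split; first by split.
move=> a a0 a1.
have -> : (fun x => a *: x) @` setT `&` M = M.
  apply/seteqP; split; first by move=> x [].
  move=> x Mx; split => //; exists (a^-1 *: x) => //.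
  by rewrite scalerA mulfV // scale1r.
done.
Qed.

Lemma eq_aux (V : zmodType) (x a l : V) : x = a + l + (x - a - l).
Proof. by rewrite -(addrA x) -opprD (addrC (a + l)) subrK. Qed.

Theorem lemma1p4 (R : realType) (K : fieldType) (abs : K -> R) (p : nat)
  (V : lmodType K) (M : set V) (tau : set (set V)) :
  prime p ->
  padic_field abs p ->
  o_submodule abs M ->
  generates_over_K abs M ->
  topology_on M tau ->
  hausdorff_on M tau ->
  compact_on M tau ->
  topological_o_module abs M tau ->
  linear_topological abs M tau ->
  MK_complete abs M tau.
Proof.
move=> pr [ha char0 absp _ _] hM gen htop _ comp htm lin.
have htop' := htop; case: htop' => [tauM tauMM tauU tauI].
have hM' := hM; case: hM' => [M0 MD MZ].
have htm' := htm; case: htm' => [contA contZ].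
have ha' := ha; case: ha' => [abs0 abs_eq0 absM absD].
pose P : K := p%:R.
have Pn0 : P != 0.
  by rewrite /P -(prednK (prime_gt0 pr)) char0.
have PXn0 k : P ^+ k != 0 by rewrite expf_neq0.
have absPX k : abs (P ^+ k) <= 1.
  by rewrite (absX_lem ha) exprn_ile1 // ltW.
have pow_small a : a != 0 -> exists k, abs (a^-1 * P ^+ k) <= 1.
  move=> an0.
  have apos : 0 < abs a.
    by rewrite lt0r abs0 andbT; apply/eqP => /abs_eq0 /eqP; rewrite (negbTE an0).
  have [k hk] := small_pow (abs0 P) absp apos.
  exists k; rewrite absM (absV_lem ha an0) (absX_lem ha) mulrC.
  by rewrite ler_pdivrMr // mul1r.
pose D (i : nat) := [set x : V | M (P ^+ i *: x)].
have exhaust x : exists m, D m x.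
  have [a [an0 a1 Max]] := gen x.
  have [k hk] := pow_small a an0.
  exists k; rewrite /D /=.
  have := MZ _ _ hk Max.
  by rewrite scalerA mulrAC mulVf // mul1r.
have Dsub i : o_submodule abs (D i).
  split; rewrite /D /=.
  - by rewrite scaler0.
  - by move=> x y Mx My; rewrite scalerDr; apply: MD.
  - by move=> a x a1 Mx; rewrite scalerA mulrC -scalerA; apply: MZ.
have Dmono i j : (i <= j)%N -> D i `<=` D j.
  move=> ij x; rewrite /D /= => Mx.
  have := MZ (P ^+ (j - i)) _ (absPX _) Mx.
  by rewrite scalerA -exprD subnK.
move=> F [FT Fn0 Fup FI] hC.
have nonempty A : F A -> exists x, A x.
  move=> FA; apply: contrapT => nA; apply: Fn0.
  suff <- : A = set0 by [].
  by apply/seteqP; split => // z Az; apply: nA; exists z.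
have key : exists n, forall A, F A -> forall U, olat abs M tau U ->
    exists a u, [/\ A a, U u & D n (a + u)].
  apply: contrapT => H.
  have H' : forall n, exists AU : set V * set V,
      [/\ F AU.1, olat abs M tau AU.2 &
          forall a u, AU.1 a -> AU.2 u -> ~ D n (a + u)].
    move=> n; apply: contrapT => Hn; apply: H; exists n => A FA U oU.
    apply: contrapT => Hne; apply: Hn; exists (A, U); split => //=.
    by move=> a u Aa Uu Dau; apply: Hne; exists a, u.
  have [f hf] := choice H'.
  pose An n := (f n).1.
  pose Un n := (f n).2.
  pose Vs := fix Vs n := match n with 0 => Un 0%N | n'.+1 => Vs n' `&` Un n'.+1 end.
  have olVs n : olat abs M tau (Vs n).
    elim: n => [|n IH] /=; first by case: (hf 0%N).
    by apply: olatI => //; case: (hf n.+1).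
  have VsU n : Vs n `<=` Un n by case: n => [|n] //= x [].
  have Vsmono i j : (i <= j)%N -> Vs j `<=` Vs i.
    move=> ij; rewrite -(subnKC ij); elim: (j - i)%N => [|d IH]; first by rewrite addn0.
    by rewrite addnS => x /= [/IH].
  pose W := [set x : V | exists N (w : nat -> V),
     (forall i, Vs i (w i) /\ D i (w i)) /\ x = \sum_(i < N) w i].
  have Wsub : o_submodule abs W.
    split.
    - exists 0%N, (fun _ => 0); split; last by rewrite big_ord0.
      move=> i; split; last by case: (Dsub i).
      by case: (olVs i) => [[]].
    - move=> _ _ [N1 [w1 [h1 ->]]] [N2 [w2 [h2 ->]]].
      exists (maxn N1 N2), (fun i => (if (i < N1)%N then w1 i else 0) + (if (i < N2)%N then w2 i else 0)); split.
        move=> i; have [a1 b1] := h1 i; have [a2 b2] := h2 i.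
        have [[V0 VD _] _] := olVs i; have [D0 DD _] := Dsub i.
        by split; [apply: VD|apply: DD]; case: ifP.
      rewrite big_split /= (big_ord_widen _ w1 (leq_maxl N1 N2)) (big_ord_widen _ w2 (leq_maxr N1 N2)).
      by rewrite big_mkcond; congr (_ + _); rewrite big_mkcond.
    - move=> a _ a1 [N [w [hw ->]]]; exists N, (fun i => a *: w i); split.
        move=> i; have [h1 h2] := hw i; split.
          by case: (olVs i) => [[_ _ Z] _]; apply: Z.
        by case: (Dsub i) => [_ _ Z]; apply: Z.
      by rewrite scaler_sumr.
  have olW : olat abs M tau W.
    split => // a an0 a1.
    have [k hk] := pow_small a an0.
    apply: (@open_submod _ _ _ _ M tau _ ((fun x => P ^+ k *: x) @` Vs k `&` M)) => //.
    - by apply: osubI => //; apply: osub_img.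
    - by case: (olVs k) => _ ht; apply: ht; [exact: PXn0 | exact: absPX].
    - by split => //; exists 0; [case: (olVs k) => [[]]|rewrite scaler0].
    - move=> _ [[v Vv <-] Mv]; split => //.
      have Wv : W v.
        exists k.+1, (fun i => if i == k then v else 0); split.
          move=> i; case: eqP => [->|_]; first by split.
          split; first by case: (olVs i) => [[]].
          by case: (Dsub i).
        rewrite big_ord_recr /= eqxx big1 ?add0r // => i _.
        by rewrite ifN // neq_ltn ltn_ord.
      exists ((a^-1 * P ^+ k) *: v); first by case: Wsub => _ _ Z; apply: Z.
      by rewrite scalerA mulrA mulfV // mul1r.
  have W0 : W 0 by case: Wsub.
  have [A [FA AW]] := hC W (olat_open olW) W0.
  have [x Ax] := nonempty A FA.
  have [m Dmx] := exhaust x.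
  have [FAm oUm hnD] := hf m.
  have [y [Ay Amy]] := nonempty _ (FI _ _ FA FAm).
  have [N [w [hw e]]] := AW y x Ay Ax.
  pose h := \sum_(i < N) (if (i <= m)%N then w i else 0).
  pose t := \sum_(i < N) (if (i <= m)%N then 0 else w i).
  have e2 : y - x = h + t.
    by rewrite e -big_split; apply: eq_bigr => i _ /=; case: ifP => _; rewrite ?addr0 ?add0r.
  have Dh : D m h.
    apply: osub_sum => // i _; case: ifP => im; last by case: (Dsub m).
    by apply: (Dmono i) => //; case: (hw i).
  have Vt : Vs m t.
    apply: osub_sum; first exact: (proj1 (olVs m)).
    move=> i _; case: ifP => im; first by case: (olVs m) => [[]].
    by apply: (Vsmono m i); [rewrite ltnW // ltnNge im | case: (hw i)].
  apply: (hnD y (- t)) => //.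
    by apply: (osubN ha); [case: oUm | apply: VsU].
  have -> : y + - t = x + h.
    have -> : y = h + t + x by rewrite -e2 subrK.
    by rewrite addrAC addrK addrC.
  by case: (Dsub m) => _ DD _; apply: DD.
have [n hn] := key.
pose Q (A U : set V) := [set z : V | M z /\
   exists a u, [/\ A a, U u & z = P ^+ n *: (a + u)]].
pose Opn (A U : set V) := [set z : V | M z /\ ~ Q A U z].
have Qmono A U A' U' : A `<=` A' -> U `<=` U' -> Q A U `<=` Q A' U'.
  move=> AA UU z; rewrite /Q /= => -[Mz [a [u [Aa Uu ez]]]]; split; first exact: Mz.
  by exists a, u; split => //; [apply: AA|apply: UU].
have tOpn A U : olat abs M tau U -> tau (Opn A U).
  move=> [oU tU]; apply: (open_of_local htop) => m; rewrite /Opn /= => -[Mm nQ].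
  have tN := tU _ (PXn0 n) (absPX n).
  have Mnm := osubN ha hM Mm.
  have N0 : ((fun x => P ^+ n *: x) @` U `&` M) (m + - m).
    by rewrite subrr; split => //; exists 0; [case: oU|rewrite scaler0].
  have [U1 [U2 [tU1 tU2 U1m U2m hU12]]] := contA m (- m) Mm Mnm _ tN N0.
  exists U1; split => // z U1z; split; first exact: tauM U1z.
  move=> [Mz [a [u [Aa Uu ez]]]]; apply: nQ; split => //.
  have [[u' Uu' eu'] _] := hU12 z (- m) U1z U2m.
  exists a, (u - u'); split => //; first by apply: (osubB ha).
  have -> : m = z - (z - m) by rewrite subKr.
  by rewrite -eu' ez -scalerBr addrA.
have [w [Mw hw]] : exists w, M w /\ forall A U, F A -> olat abs M tau U -> Q A U w.
  apply: contrapT => Hw.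
  pose Fam := [set O : set V | exists A U, [/\ F A, olat abs M tau U & O = Opn A U]].
  have Famt : Fam `<=` tau by move=> O [A [U [FA oU ->]]]; exact: tOpn.
  have cov : M `<=` \bigcup_(O in Fam) O.
    move=> z Mz; apply: contrapT => nz; apply: Hw; exists z; split => // A U FA oU.
    apply: contrapT => nQ; apply: nz; exists (Opn A U); last by split.
    by exists A, U.
  have [N' [G [hG hcov]]] := comp Fam Famt cov.
  have ind k : (k <= N')%N -> exists A U, [/\ F A, olat abs M tau U &
      forall i, (i < k)%N -> forall z, Q A U z -> ~ G i z].
    elim: k => [|k IH] kN.
      by exists setT, setT; split => //; exact: olatT.
    have [A [U [FA oU hAU]]] := IH (ltnW kN).
    have [Ak [Uk [FAk oUk eG]]] := hG k kN.
    exists (A `&` Ak), (U `&` Uk); split; first exact: FI.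
      exact: olatI.
    move=> i; rewrite ltnS leq_eqVlt => /orP [/eqP ->|ik] z hz.
      rewrite eG => -[_]; apply.
      by apply: Qmono hz => x [].
    by apply: (hAU i ik); apply: Qmono hz => x [].
  have [A [U [FA oU hAU]]] := ind N' (leqnn _).
  have [a [u [Aa Uu Dau]]] := hn A FA U oU.
  have Qz : Q A U (P ^+ n *: (a + u)) by split => //; exists a, u.
  have [i [iN Gi]] := hcov _ Dau.
  exact: hAU i iN _ Qz Gi.
exists ((P ^+ n)^-1 *: w) => O hO Ov.
have [L [oL tL vLO]] := hO _ Ov.
have olL : olat abs M tau L by split.
have L0 : L 0 by case: oL.
have [A [FA AL]] := hC L (olat_open olL) L0.
have [_ [a [l [Aa Ll ew]]]] := hw A L FA olL.
have ev : (P ^+ n)^-1 *: w = a + l by rewrite ew scalerA mulVf // scale1r.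
apply: (Fup A) => // x Ax.
have -> : x = (P ^+ n)^-1 *: w + (x - a - l).
  by rewrite ev; apply: eq_aux.
apply: vLO; apply: (osubB ha) => //; exact: AL.
Qed.
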